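(* The smallest eigenvalue of $P_{DC}^N=\tilde{\Pi}^N P_{DC} \tilde{\Pi}^N$ is \begin{equation*} \lambda^N_{\mathrm{min}}=\begin{cases} \frac{1}{2} -\frac{1}{2} \sqrt{(2p_{z}-1)^2+8\cdot 2^{-N}(p_{z}-p_{z}^2)} & N \text{ odd},\\ \frac{1}{2} -\frac{1}{2} \sqrt{(2p_{z}-1)^2+16\cdot 2^{-N}(p_{z}-p_{z}^2)} & N \text{ even}. \end{cases} \end{equation*}
   Context: Bob uses active basis choice with perfect-efficiency threshold detectors on a two-polarization-mode Fock space $\mathcal{H}_B$. His double-click POVM element in the $H/V$ basis is $P_{H/V} = \sum_{n_V=1}^\infty \sum_{n_H=1}^\infty |n_H,n_V\rangle\langle n_H,n_V|$, and $P_{D/A}$ is defined analogously in the diagonal/anti-diagonal basis. With $H/V$ chosen with probability $p_z$, the total double-click POVM is $P_{DC} = p_{z} P_{H/V}+ (1-p_{z}) P_{D/A}$. For $N=0,1,2,\dots$, the projector onto the total $N$-photon subspace is $\tilde{\Pi}^N = \sum_{n=0}^N |n,N-n\rangle\langle n,N-n|_{H/V}=\sum_{n=0}^N |n,N-n\rangle\langle n,N-n|_{D/A}$; $P_{DC}$ is block-diagonal with respect to these projectors. *)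

(* Defs.v *)
From HB Require Import structures.
From mathcomp Require Import all_boot all_order all_algebra.
Set Implicit Arguments. Unset Strict Implicit. Unset Printing Implicit Defensive.
Import Order.TTheory GRing.Theory Num.Theory.
Local Open Scope ring_scope.

(* The total N-photon subspace  Pi~^N H_B  of the two-polarization-mode Fock
   space is represented in coordinates w.r.t. its H/V Fock basis
   |k, N-k>_{H/V}, k = 0..N  (column vectors in 'cV[R]_(N.+1)).
   All amplitudes involved are real, so a real field R suffices. *)

Definition hv_ket (R : rcfType) (N : nat) (n : 'I_N.+1) : 'cV[R]_(N.+1) :=
  \col_(k < N.+1) (if k == n then 1 else 0).

(* Coordinate  <k, N-k|_{H/V} |n, N-n>_{D/A}  with the mode convention
   a_D = (a_H + a_V)/sqrt 2,  a_A = (a_H - a_V)/sqrt 2, i.e.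
   |n,N-n>_{D/A} = (a_D^dag)^n (a_A^dag)^(N-n) |0> / sqrt(n! (N-n)!). *)
Definition da_coef (R : rcfType) (N n k : nat) : R :=
  Num.sqrt ((k`! * (N - k)`!)%:R / (n`! * (N - n)`!)%:R) / Num.sqrt (2 ^+ N)
  * \sum_(i < k.+1)
      ('C(n, i) * 'C(N - n, k - i))%:R * (-1) ^+ (N - n - (k - i)).

Definition da_ket (R : rcfType) (N : nat) (n : 'I_N.+1) : 'cV[R]_(N.+1) :=
  \col_(k < N.+1) da_coef R N n k.

Definition ket_proj (R : rcfType) (m : nat) (v : 'cV[R]_m) : 'M[R]_m :=
  v *m v^T.

Definition PHV_N (R : rcfType) (N : nat) : 'M[R]_(N.+1) :=
  \sum_(n < N.+1 | (1 <= n)%N && (1 <= N - n)%N) ket_proj (hv_ket R n).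

Definition PDA_N (R : rcfType) (N : nat) : 'M[R]_(N.+1) :=
  \sum_(n < N.+1 | (1 <= n)%N && (1 <= N - n)%N) ket_proj (da_ket R n).

Definition PDC_N (R : rcfType) (pz : R) (N : nat) : 'M[R]_(N.+1) :=
  pz *: PHV_N R N + (1 - pz) *: PDA_N R N.

Definition lambda_min (R : rcfType) (pz : R) (N : nat) : R :=
  2^-1 - 2^-1 * Num.sqrt ((2 * pz - 1) ^+ 2
      + (if odd N then 8 else 16) * (2 ^+ N)^-1 * (pz - pz ^+ 2)).

(* Main.v *)
Require Import Defs.
From HB Require Import structures.
From mathcomp Require Import all_boot all_order all_algebra.
From mathcomp Require Import ring lra zify.
Import Order.TTheory GRing.Theory Num.Theory.
Local Open Scope ring_scope.

Section Comb.
Variable A : comNzRingType.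

Definition Sg (N m k : nat) : A :=
  \sum_(i < k.+1) ('C(m, i) * 'C(N - m, k - i))%:R * (-1) ^+ (N - m - (k - i)).

Lemma coef_XaddC_exp (c : A) n i :
  (('X + c%:P) ^+ n)`_i = c ^+ (n - i) *+ 'C(n, i).
Proof.
elim: n i => [|n IH] i.
  by rewrite expr0 coef1; case: i => [|i] //=; rewrite mulr1n.
rewrite exprS mulrDl coefD coefXM coefCM.
case: i => [|i] /=.
  by rewrite add0r IH !subn0 !bin0 !mulr1n exprS.
rewrite !IH binS mulrnDr subSS addrC; congr (_ + _).
case: (leqP i.+1 n) => hi.
  by rewrite mulrnAr -exprS; have -> : (n - i.+1).+1 = (n - i)%N by lia.
by rewrite bin_small // !mulr0n mulr0.
Qed.

Lemma coef_L (b : A) N m k : (m <= N)%N ->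
  (('X + b%:P) ^+ m * ('X + (- b)%:P) ^+ (N - m))`_k = Sg N m k * b ^+ (N - k).
Proof.
move=> hm; rewrite coefM /Sg big_distrl /=; apply: eq_bigr => [[i hi]] _ /=.
rewrite !coef_XaddC_exp.
case: (leqP i m) => him; last first.
  by rewrite (bin_small him) mul0n mulr0n !mul0r.
case: (leqP (k - i) (N - m)) => hk; last first.
  by rewrite (bin_small hk) muln0 mulr0 mul0r mul0r.
rewrite (exprNn b) -(mulr_natl (b ^+ _) 'C(m, i)) -(mulr_natl (_ * _) 'C(N - m, k - i)) natrM.
have -> : b ^+ (N - k) = b ^+ (m - i) * b ^+ (N - m - (k - i)).
  by rewrite -exprD; have -> : (m - i + (N - m - (k - i)) = N - k)%N by lia.
ring.
Qed.
End Comb.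

Lemma Sg_polyC (R : comNzRingType) N m k : Sg {poly R} N m k = (Sg R N m k)%:P.
Proof.
rewrite /Sg rmorph_sum; apply: eq_bigr => i _.
by rewrite [in RHS]rmorphM [in RHS]rmorphXn rmorphN1 rmorph_nat.
Qed.

Lemma size_Q (A : comNzRingType) (b : A) N m : (m <= N)%N ->
  (size (('X + b%:P) ^+ m * ('X + (- b)%:P) ^+ (N - m))%R <= N.+1)%N.
Proof.
move=> hm; apply: leq_trans (size_polyMleq _ _) _.
have h1 := size_poly_exp_leq ('X + b%:P) m; have h2 := size_poly_exp_leq ('X + (- b)%:P) (N - m).
rewrite !size_XaddC /= !mul1n in h1 h2.
rewrite -subn1 leq_subLR add1n; apply: leq_trans (leq_add h1 h2) _; lia.
Qed.

Lemma SS (R : comNzRingType) N m j : (m <= N)%N ->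
  \sum_(k < N.+1) Sg R N m k * Sg R N k j = 2 ^+ N * (j == m)%:R.
Proof.
move=> hm.
pose a : {poly R} := 'X + 1%:P.
pose b : {poly R} := 'X + (-1)%:P.
pose Q : {poly {poly R}} := ('X + b%:P) ^+ m * ('X + (- b)%:P) ^+ (N - m).
have e1 : Q.[a] = (2 ^+ N)%:P * 'X ^+ m.
  rewrite /Q hornerM !horner_exp !hornerD !hornerX !hornerC.
  have -> : a + b = 2%:P * 'X by rewrite /a /b polyCN; ring.
  have -> : a + - b = 2%:P by rewrite /a /b polyCN polyC1; ring.
  rewrite exprMn -!rmorphXn /=.
  by rewrite mulrAC -rmorphM /= -natrM -expnD subnKC.
have e2 : Q.[a] = \sum_(k < N.+1) (Sg R N m k)%:P * (('X + 1%:P) ^+ k * ('X + (-1)%:P) ^+ (N - k)).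
  rewrite (horner_coef_wide _ (@size_Q _ b _ _ hm)); apply: eq_bigr => k _.
  rewrite coef_L // Sg_polyC -mulrA; congr (_ * _).
  by rewrite mulrC /a /b.
have := congr1 (fun p : {poly R} => p`_j) (etrans (esym e2) e1).
rewrite /= coef_sum coefCM coefXn => <-.
apply: eq_bigr => k _; rewrite coefCM coef_L; last by case: k => /= k; lia.
by rewrite expr1n mulr1.
Qed.

Section Sym.
Variable R : comNzRingType.

Definition Tm (N m k i : nat) : R :=
  ('C(m, i) * 'C(N - m, k - i))%:R * (-1) ^+ (N - m - (k - i)).

Lemma Sg_wide N m k : (k <= N)%N ->
  Sg R N m k = \sum_(i < N.+1) (if (i <= k)%N && (i <= m)%N then Tm N m k i else 0).
Proof.
move=> hk; rewrite /Sg (big_ord_widen N.+1 (fun i => Tm N m k i)) // big_mkcond.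
apply: eq_bigr => [[i hi]] _ /=; rewrite ltnS.
case: (leqP i k) => //= hik; case: (leqP i m) => //= him.
by rewrite /Tm (bin_small him) mul0n mul0r.
Qed.

Lemma Tm_sym N m k i : (m <= N)%N -> (k <= N)%N -> (i <= k)%N -> (i <= m)%N ->
  (k`! * (N - k)`!)%:R * Tm N m k i = (m`! * (N - m)`!)%:R * Tm N k m i.
Proof.
move=> hm hk hik him; rewrite /Tm.
case: (leqP (k - i) (N - m)) => h; last first.
  have h' : (N - k < m - i)%N by lia.
  by rewrite (bin_small h) (bin_small h') !muln0 !mul0r !mulr0.
have -> : (N - k - (m - i) = N - m - (k - i))%N by lia.
rewrite !mulrA -!natrM; congr (_%:R * _).
have e1 := bin_fact him; have e2 := bin_fact h.
have e3 := bin_fact hik.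
have h2 : (m - i <= N - k)%N by lia.
have e4 := bin_fact h2.
have ed : (N - k - (m - i) = N - m - (k - i))%N by lia.
rewrite ed in e4.
set d := (N - m - (k - i))%N in e2 e4 *.
apply/eqP; rewrite -(@eqn_pmul2r (i`! * (m - i)`! * ((k - i)`! * d`!))); last first.
  by rewrite !muln_gt0 !fact_gt0.
apply/eqP.
transitivity (k`! * (N - k)`! * ('C(m, i) * (i`! * (m - i)`!)) * ('C(N - m, k - i) * ((k - i)`! * d`!)))%N.
  ring.
rewrite e1 e2 -e3 -e4; ring.
Qed.
End Sym.

Lemma Sg_sym (R : comNzRingType) N m k : (m <= N)%N -> (k <= N)%N ->
  (k`! * (N - k)`!)%:R * Sg R N m k = (m`! * (N - m)`!)%:R * Sg R N k m.
Proof.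
move=> hm hk; rewrite (@Sg_wide R N m k hk) (@Sg_wide R N k m hm) !mulr_sumr.
apply: eq_bigr => i _; rewrite andbC.
case: ifP => [/andP[h1 h2]|_]; last by rewrite !mulr0.
exact: Tm_sym.
Qed.

Section Real.
Variable R : rcfType.
Variable N : nat.

Definition dd (k : nat) : R := (k`! * (N - k)`!)%:R.
Definition sd (k : nat) : R := Num.sqrt (dd k).
Definition cc : R := (Num.sqrt (2 ^+ N))^-1.

Lemma dd_gt0 k : 0 < dd k.
Proof. by rewrite /dd ltr0n muln_gt0 !fact_gt0. Qed.

Lemma sd_gt0 k : 0 < sd k.
Proof. by rewrite /sd sqrtr_gt0 dd_gt0. Qed.

Lemma sd_sq k : sd k ^+ 2 = dd k.
Proof. by rewrite /sd sqr_sqrtr // ltW // dd_gt0. Qed.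

Lemma cc_sq : cc ^+ 2 = (2 ^+ N)^-1.
Proof. by rewrite /cc exprVn sqr_sqrtr // exprn_ge0. Qed.

Lemma da_coef_eq n k : da_coef R N n k = sd k / sd n * cc * Sg R N n k.
Proof.
rewrite /da_coef /sd /cc sqrtrM; last by rewrite ltW // dd_gt0.
by rewrite sqrtrV // ltW // dd_gt0.
Qed.

Lemma da_coef_eq2 n k : da_coef R N n k = cc / (sd k * sd n) * (dd k * Sg R N n k).
Proof.
rewrite da_coef_eq -sd_sq.
have := sd_gt0 k; have := sd_gt0 n.
move=> h1 h2; field.
by rewrite !gt_eqF.
Qed.

Lemma da_sym n k : (n <= N)%N -> (k <= N)%N -> da_coef R N n k = da_coef R N k n.
Proof.
move=> hn hk; rewrite !da_coef_eq2 /dd Sg_sym // mulrC.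
by rewrite (mulrC (sd k)) mulrC.
Qed.

Lemma Uorth a b : (a <= N)%N -> (b <= N)%N ->
  \sum_(j < N.+1) da_coef R N j a * da_coef R N b j = (a == b)%:R.
Proof.
move=> ha hb.
transitivity (sd a / sd b * cc ^+ 2 * \sum_(j < N.+1) Sg R N b j * Sg R N j a).
  rewrite mulr_sumr; apply: eq_bigr => j _; rewrite !da_coef_eq.
  have := sd_gt0 j; move=> h; field; by rewrite !gt_eqF // sd_gt0.
rewrite SS // cc_sq.
case: eqP => [->|_]; last by rewrite !mulr0.
rewrite mulr1 divff ?gt_eqF ?sd_gt0 // mul1r mulVf //.
by rewrite expf_neq0 // pnatr_eq0.
Qed.

Lemma Ucol a b : (a <= N)%N -> (b <= N)%N ->
  \sum_(k < N.+1) da_coef R N a k * da_coef R N b k = (a == b)%:R.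
Proof.
move=> ha hb; rewrite -Uorth //; apply: eq_bigr => [[k hk]] _ /=.
by rewrite (@da_sym a k).
Qed.

Lemma Urow i j : (i <= N)%N -> (j <= N)%N ->
  \sum_(n < N.+1) da_coef R N n i * da_coef R N n j = (i == j)%:R.
Proof.
move=> hi hj; rewrite -Uorth //; apply: eq_bigr => [[n hn]] _ /=.
by rewrite (@da_sym n j).
Qed.
End Real.

Lemma quad_psd (R : rcfType) (al ga be x y : R) :
  0 <= al -> 0 <= ga -> be ^+ 2 <= al * ga -> 0 <= al * x ^+ 2 + ga * y ^+ 2 - 2 * be * x * y.
Proof.
move=> ha hg hb.
have [hal0|ha'] := eqVneq al 0.
  rewrite hal0 mul0r in hb; rewrite hal0.
  have hb0 : be ^+ 2 == 0 by rewrite eq_le hb sqr_ge0.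
  rewrite expf_eq0 /= in hb0; rewrite (eqP hb0).
  have := sqr_ge0 y; nra.
have hpos : 0 < al by rewrite lt_def ha' ha.
have : 0 <= al * (al * x ^+ 2 + ga * y ^+ 2 - 2 * be * x * y).
  have -> : al * (al * x ^+ 2 + ga * y ^+ 2 - 2 * be * x * y) =
    (al * x - be * y) ^+ 2 + (al * ga - be ^+ 2) * y ^+ 2 by ring.
  by apply: addr_ge0; [exact: sqr_ge0| apply: mulr_ge0; [lra| exact: sqr_ge0]].
by rewrite pmulr_rge0.
Qed.

Lemma poly_ineq (R : rcfType) (od : bool) (p c mu x0 xN y0 yN : R) :
  0 <= p <= 1 -> p <= mu -> 1 - p <= mu ->
  mu ^+ 2 - mu + (1 - (if od then 2 else 4) * c ^+ 2) * (p * (1 - p)) = 0 ->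
  p ^+ 2 * (x0 ^+ 2 + xN ^+ 2) + (1 - p) ^+ 2 * (y0 ^+ 2 + yN ^+ 2)
  + 2 * p * (1 - p) * c * ((if od then - x0 * y0 else x0 * y0) + x0 * yN + xN * y0 + xN * yN)
  <= mu * (p * (x0 ^+ 2 + xN ^+ 2) + (1 - p) * (y0 ^+ 2 + yN ^+ 2)).
Proof.
case/andP=> hp0 hp1 hm1 hm2 hmu.
rewrite -subr_ge0.
case: od hmu => hmu.
- set al := p * (mu - p); set ga := (1 - p) * (mu - 1 + p) / 2; set be := p * (1 - p) * c.
  have hal : 0 <= al by apply: mulr_ge0; lra.
  have hga : 0 <= ga by apply: mulr_ge0; [apply: mulr_ge0; lra|lra].
  have hbe : be ^+ 2 <= al * ga.
    rewrite /al /ga /be.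
    have -> : p * (mu - p) * ((1 - p) * (mu - 1 + p) / 2) =
      p * (1 - p) * (mu ^+ 2 - mu + p * (1 - p)) / 2 by ring.
    have -> : mu ^+ 2 - mu + p * (1 - p) = 2 * c ^+ 2 * (p * (1 - p)) by lra.
    lra.
  have h1 := @quad_psd _ al ga be x0 (yN - y0) hal hga hbe.
  have h2 := @quad_psd _ al ga be xN (yN + y0) hal hga hbe.
  have -> : mu * (p * (x0 ^+ 2 + xN ^+ 2) + (1 - p) * (y0 ^+ 2 + yN ^+ 2)) -
   (p ^+ 2 * (x0 ^+ 2 + xN ^+ 2) + (1 - p) ^+ 2 * (y0 ^+ 2 + yN ^+ 2) +
    2 * p * (1 - p) * c * (- x0 * y0 + x0 * yN + xN * y0 + xN * yN)) =
   (al * x0 ^+ 2 + ga * (yN - y0) ^+ 2 - 2 * be * x0 * (yN - y0)) +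
   (al * xN ^+ 2 + ga * (yN + y0) ^+ 2 - 2 * be * xN * (yN + y0)).
    by rewrite /al /ga /be; field.
  exact: addr_ge0 h1 h2.
- set al := p * (mu - p) / 2; set ga := (1 - p) * (mu - 1 + p) / 2; set be := p * (1 - p) * c.
  have hal : 0 <= al by apply: mulr_ge0; [apply: mulr_ge0; lra|lra].
  have hga : 0 <= ga by apply: mulr_ge0; [apply: mulr_ge0; lra|lra].
  have hbe : be ^+ 2 <= al * ga.
    rewrite /al /ga /be.
    have -> : p * (mu - p) / 2 * ((1 - p) * (mu - 1 + p) / 2) =
      p * (1 - p) * (mu ^+ 2 - mu + p * (1 - p)) / 4 by field; rewrite ?pnatr_eq0.
    have -> : mu ^+ 2 - mu + p * (1 - p) = 4 * c ^+ 2 * (p * (1 - p)) by lra.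
    lra.
  have h1 := @quad_psd _ al ga be (x0 + xN) (y0 + yN) hal hga hbe.
  have h2 : 0 <= al * (x0 - xN) ^+ 2 by apply: mulr_ge0 => //; exact: sqr_ge0.
  have h3 : 0 <= ga * (y0 - yN) ^+ 2 by apply: mulr_ge0 => //; exact: sqr_ge0.
  have -> : mu * (p * (x0 ^+ 2 + xN ^+ 2) + (1 - p) * (y0 ^+ 2 + yN ^+ 2)) -
   (p ^+ 2 * (x0 ^+ 2 + xN ^+ 2) + (1 - p) ^+ 2 * (y0 ^+ 2 + yN ^+ 2) +
    2 * p * (1 - p) * c * (x0 * y0 + x0 * yN + xN * y0 + xN * yN)) =
   (al * (x0 + xN) ^+ 2 + ga * (y0 + yN) ^+ 2 - 2 * be * (x0 + xN) * (y0 + yN)) +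
   al * (x0 - xN) ^+ 2 + ga * (y0 - yN) ^+ 2.
    by rewrite /al /ga /be; field.
  by apply: addr_ge0; [apply: addr_ge0|].
Qed.

Section Core.
Variable R : rcfType.
Variable n : nat.
Implicit Types x y z v : 'rV[R]_n.

Definition ip x y := \sum_(k < n) x 0 k * y 0 k.

Lemma ipC x y : ip x y = ip y x.
Proof. by apply: eq_bigr => k _; rewrite mulrC. Qed.

Lemma ipDl x y z : ip (x + y) z = ip x z + ip y z.
Proof. by rewrite /ip -big_split; apply: eq_bigr => k _; rewrite mxE mulrDl. Qed.

Lemma ipZl a x z : ip (a *: x) z = a * ip x z.
Proof. by rewrite /ip mulr_sumr; apply: eq_bigr => k _; rewrite mxE mulrA. Qed.

Lemma ipNl x z : ip (- x) z = - ip x z.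
Proof. by rewrite -scaleN1r ipZl mulN1r. Qed.

Lemma ipBl x y z : ip (x - y) z = ip x z - ip y z.
Proof. by rewrite ipDl ipNl. Qed.

Lemma ipDr x y z : ip z (x + y) = ip z x + ip z y.
Proof. by rewrite ipC ipDl !(ipC _ z). Qed.

Lemma ipZr a x z : ip z (a *: x) = a * ip z x.
Proof. by rewrite ipC ipZl ipC. Qed.

Lemma ipBr x y z : ip z (x - y) = ip z x - ip z y.
Proof. by rewrite ipC ipBl !(ipC _ z). Qed.

Lemma ip_ge0 x : 0 <= ip x x.
Proof. by apply: sumr_ge0 => k _; rewrite -expr2 sqr_ge0. Qed.

Lemma ip0l z : ip 0 z = 0.
Proof. by rewrite /ip big1 // => k _; rewrite mxE mul0r. Qed.

Variables (e0 eN u0 uN : 'rV[R]_n) (p c mu : R) (od : bool).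
Hypotheses (g1 : ip e0 e0 = 1) (g2 : ip eN eN = 1) (g3 : ip e0 eN = 0)
  (g4 : ip u0 u0 = 1) (g5 : ip uN uN = 1) (g6 : ip u0 uN = 0)
  (g7 : ip e0 u0 = if od then - c else c) (g8 : ip e0 uN = c)
  (g9 : ip eN u0 = c) (g10 : ip eN uN = c).
Hypotheses (hp : 0 <= p <= 1) (hc : 0 < c) (hm1 : p <= mu) (hm2 : 1 - p <= mu)
  (hmu : mu ^+ 2 - mu + (1 - (if od then 2 else 4) * c ^+ 2) * (p * (1 - p)) = 0).

Definition Qv v := (p * ip v e0) *: e0 + (p * ip v eN) *: eN
   + ((1 - p) * ip v u0) *: u0 + ((1 - p) * ip v uN) *: uN.

Lemma mu_gt0 : 0 < mu.
Proof. have h1 := hm1; have h2 := hm2; lra. Qed.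

Lemma core_bound v : ip (Qv v) v <= mu * ip v v.
Proof.
set x0 := ip v e0; set xN := ip v eN; set y0 := ip v u0; set yN := ip v uN.
have hS : ip (Qv v) v = p * (x0 ^+ 2 + xN ^+ 2) + (1 - p) * (y0 ^+ 2 + yN ^+ 2).
  rewrite /Qv !ipDl !ipZl !(ipC _ v) -/x0 -/xN -/y0 -/yN; ring.
have hT : ip (Qv v) (Qv v) = p ^+ 2 * (x0 ^+ 2 + xN ^+ 2) + (1 - p) ^+ 2 * (y0 ^+ 2 + yN ^+ 2)
  + 2 * p * (1 - p) * c * ((if od then - x0 * y0 else x0 * y0) + x0 * yN + xN * y0 + xN * yN).
  rewrite /Qv !ipDl !ipZl !ipDr !ipZr.
  rewrite !(ipC u0 e0) !(ipC uN e0) !(ipC u0 eN) !(ipC uN eN) !(ipC eN e0) !(ipC uN u0).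
  rewrite g1 g2 g3 g4 g5 g6 g7 g8 g9 g10 -/x0 -/xN -/y0 -/yN.
  by case hod: od; ring.
have h0 := ip_ge0 (mu *: v - Qv v).
rewrite !ipBl !ipBr !ipZl !ipZr (ipC v (Qv v)) hS hT in h0.
rewrite hS.
have hP := @poly_ineq _ od p c mu x0 xN y0 yN hp hm1 hm2 hmu.
have hmu0 := mu_gt0.
set S := p * (x0 ^+ 2 + xN ^+ 2) + (1 - p) * (y0 ^+ 2 + yN ^+ 2) in hP h0 *.
set T := _ + _ + 2 * p * (1 - p) * c * _ in hP h0.
set V := ip v v in h0 *.
nra.
Qed.


Lemma core_eig : exists v, ip v e0 != 0 /\ Qv v = mu *: v.
Proof.
have hmu0 := mu_gt0.
have hc0 := hc.
set x := 2 * c * p; set y := mu - p.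
have E1 : p * (x + 2 * c * y) = mu * x by rewrite /x /y; ring.
have hne : x + 2 * c * y != 0.
  have -> : x + 2 * c * y = 2 * c * mu by rewrite /x /y; ring.
  by rewrite gt_eqF // !mulr_gt0.
have g7' := g7; have hmu' := hmu.
case hod: od in g7' hmu'.
- exists (x *: e0 + y *: (uN - u0)).
  have i1 : ip (x *: e0 + y *: (uN - u0)) e0 = x + 2 * c * y.
    rewrite ipDl !ipZl ipBl !(ipC _ e0) g1 g7' g8; ring.
  have i2 : ip (x *: e0 + y *: (uN - u0)) eN = 0.
    rewrite ipDl !ipZl ipBl !(ipC _ eN) (ipC eN e0) g3 g9 g10; ring.
  have i3 : ip (x *: e0 + y *: (uN - u0)) u0 = - (c * x + y).
    rewrite ipDl !ipZl ipBl (ipC uN u0) g4 g6 g7'; ring.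
  have i4 : ip (x *: e0 + y *: (uN - u0)) uN = c * x + y.
    rewrite ipDl !ipZl ipBl g5 g6 g8; ring.
  have E2 : (1 - p) * (c * x + y) = mu * y.
    apply/eqP; rewrite -subr_eq0.
    have -> : (1 - p) * (c * x + y) - mu * y =
      - (mu ^+ 2 - mu + (1 - 2 * c ^+ 2) * (p * (1 - p))) by rewrite /x /y; ring.
    by rewrite hmu' oppr0.
  split; first by rewrite i1.
  rewrite /Qv i1 i2 i3 i4.
  apply/rowP => k; rewrite !mxE.
  have -> : (1 - p) * - (c * x + y) = - (mu * y) by rewrite -E2; ring.
  rewrite E1 E2; ring.
- exists (x *: (e0 + eN) + y *: (u0 + uN)).
  have i1 : ip (x *: (e0 + eN) + y *: (u0 + uN)) e0 = x + 2 * c * y.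
    rewrite ipDl !ipZl !ipDl; rewrite ?(ipC eN e0) ?(ipC u0 e0) ?(ipC uN e0) ?(ipC u0 eN) ?(ipC uN eN) ?(ipC uN u0) g1 g3 g7' g8; ring.
  have i2 : ip (x *: (e0 + eN) + y *: (u0 + uN)) eN = x + 2 * c * y.
    rewrite ipDl !ipZl !ipDl; rewrite ?(ipC eN e0) ?(ipC u0 e0) ?(ipC uN e0) ?(ipC u0 eN) ?(ipC uN eN) ?(ipC uN u0) g2 g3 g9 g10; ring.
  have i3 : ip (x *: (e0 + eN) + y *: (u0 + uN)) u0 = 2 * c * x + y.
    rewrite ipDl !ipZl !ipDl; rewrite ?(ipC eN e0) ?(ipC u0 e0) ?(ipC uN e0) ?(ipC u0 eN) ?(ipC uN eN) ?(ipC uN u0) g4 g6 g7' g9; ring.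
  have i4 : ip (x *: (e0 + eN) + y *: (u0 + uN)) uN = 2 * c * x + y.
    rewrite ipDl !ipZl !ipDl; rewrite ?(ipC eN e0) ?(ipC u0 e0) ?(ipC uN e0) ?(ipC u0 eN) ?(ipC uN eN) ?(ipC uN u0) g5 g6 g8 g10; ring.
  have E2 : (1 - p) * (2 * c * x + y) = mu * y.
    apply/eqP; rewrite -subr_eq0.
    have -> : (1 - p) * (2 * c * x + y) - mu * y =
      - (mu ^+ 2 - mu + (1 - 4 * c ^+ 2) * (p * (1 - p))) by rewrite /x /y; ring.
    by rewrite hmu' oppr0.
  split; first by rewrite i1.
  rewrite /Qv i1 i2 i3 i4.
  apply/rowP => k; rewrite !mxE.
  rewrite E1 E2; ring.
Qed.
End Core.

Lemma split_sum (M : zmodType) N (G : 'I_N.+1 -> M) : (1 <= N)%N ->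
  \sum_(n < N.+1 | (1 <= n)%N && (1 <= N - n)%N) G n = \sum_n G n - G ord0 - G ord_max.
Proof.
move=> hN.
have hne : (ord_max != ord0 :> 'I_N.+1) by rewrite -val_eqE /= -lt0n.
have -> : \sum_n G n = G ord0 + (G ord_max + \sum_(n | (n != ord0) && (n != ord_max)) G n).
  by rewrite (bigD1 ord0) //= (bigD1 ord_max) //=.
have gen : forall a b t : M, a + (b + t) - a - b = t.
  by move=> a b t; rewrite [a + _]addrC addrK [b + t]addrC addrK.
rewrite gen.
apply: eq_bigl => i; rewrite -!val_eqE /=.
case: i => i hi /=; apply/idP/idP; first by move/andP => [h1 h2]; apply/andP; split; apply/eqP; lia.
by move/andP => [/eqP h1 /eqP h2]; apply/andP; split; lia.
Qed.

Arguments ip {R n}.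
Arguments Qv {R n}.

Section Glue.
Variable R : rcfType.
Variable N : nat.
Hypothesis hN : (1 <= N)%N.

Definition e0 : 'rV[R]_N.+1 := (hv_ket R (ord0 : 'I_N.+1))^T.
Definition eN : 'rV[R]_N.+1 := (hv_ket R (ord_max : 'I_N.+1))^T.
Definition u0 : 'rV[R]_N.+1 := (da_ket R (ord0 : 'I_N.+1))^T.
Definition uN : 'rV[R]_N.+1 := (da_ket R (ord_max : 'I_N.+1))^T.

Lemma proj_act (v : 'rV[R]_N.+1) (w : 'cV[R]_N.+1) : v *m ket_proj w = ip v w^T *: w^T.
Proof.
rewrite /ket_proj mulmxA; apply/rowP => k; rewrite !mxE big_ord1 !mxE.
congr (_ * _); apply: eq_bigr => i _; rewrite !mxE //.
Qed.

Lemma hv_complete : \sum_(n < N.+1) ket_proj (hv_ket R n) = 1%:M.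
Proof.
apply/matrixP => i j; rewrite summxE !mxE.
under eq_bigr => n _ do rewrite !mxE big_ord1 !mxE.
rewrite (bigD1 i) //= big1 => [|k hk]; first by rewrite eqxx mul1r addr0 eq_sym; case: eqP.
by rewrite eq_sym (negbTE hk) mul0r.
Qed.

Lemma da_complete : \sum_(n < N.+1) ket_proj (da_ket R n) = 1%:M.
Proof.
apply/matrixP => i j; rewrite summxE !mxE.
under eq_bigr => n _ do rewrite !mxE big_ord1 !mxE.
rewrite Urow; [|by rewrite -ltnS|by rewrite -ltnS].
by [].
Qed.


Lemma PDC_act pz (v : 'rV[R]_N.+1) :
  v *m PDC_N pz N = v - Qv e0 eN u0 uN pz v.
Proof.
rewrite /PDC_N /PHV_N /PDA_N !split_sum // hv_complete da_complete.
rewrite mulmxDr -!scalemxAr !mulmxBr mulmx1 !proj_act.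
rewrite /Qv /e0 /eN /u0 /uN.
apply/rowP => k; rewrite !mxE; ring.
Qed.

Lemma ip_hv (i : 'I_N.+1) (w : 'rV[R]_N.+1) : ip (hv_ket R i)^T w = w 0 i.
Proof.
rewrite /ip (bigD1 i) //= big1 => [|k hk]; first by rewrite !mxE eqxx mul1r addr0.
by rewrite !mxE (negbTE hk) mul0r.
Qed.

Lemma ip_da (a b : 'I_N.+1) : ip (da_ket R a)^T (da_ket R b)^T = (a == b)%:R.
Proof.
rewrite /ip; under eq_bigr => k _ do rewrite !mxE.
rewrite Ucol; [|by rewrite -ltnS|by rewrite -ltnS].
by [].
Qed.
End Glue.

Section Corner.
Variable R : rcfType.
Variable N : nat.
Hypothesis hN : (1 <= N)%N.

Lemma sd_ne0 k : sd R N k != 0.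
Proof. by rewrite gt_eqF // sd_gt0. Qed.

Lemma sd0N : sd R N 0 = sd R N N.
Proof. by rewrite /sd /dd subnn subn0 mulnC. Qed.

Lemma c00 : da_coef R N 0 0 = if odd N then - cc R N else cc R N.
Proof.
rewrite da_coef_eq divff ?sd_ne0 // mul1r /Sg big_ord1 /= bin0 !subn0 bin0 mul1n mul1r.
by rewrite -signr_odd; case: (odd N); rewrite ?mulrN1 ?mulr1.
Qed.

Lemma c0N : da_coef R N 0 N = cc R N.
Proof.
rewrite da_coef_eq -sd0N divff ?sd_ne0 // mul1r /Sg big_ord_recl /= big1 => [|i _].
  by rewrite bin0 subn0 subnn binn mul1n mul1r addr0 mulr1.
by rewrite /bump /= bin0n mul0n mul0r.
Qed.

Lemma cN0 : da_coef R N N 0 = cc R N.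
Proof.
rewrite da_coef_eq sd0N divff ?sd_ne0 // mul1r /Sg big_ord1 /= !bin0 subnn mul1r mulr1.
by [].
Qed.

Lemma cNN : da_coef R N N N = cc R N.
Proof.
rewrite da_coef_eq divff ?sd_ne0 // mul1r /Sg big_ord_recr /= big1 => [|i _].
  by rewrite binn subnn bin0 subnn mul1r add0r mulr1.
have h : (0 < N - i)%N by case: i => /= i hi; lia.
by rewrite subnn (bin_small h) muln0 mul0r.
Qed.
End Corner.

Lemma ip_gt0 (R : rcfType) n (v : 'rV[R]_n) : v != 0 -> 0 < ip v v.
Proof.
move=> hv; rewrite lt_def ip_ge0 andbT; apply: contra hv => /eqP h.
have hge : forall k : 'I_n, true -> 0 <= v 0 k * v 0 k by move=> k _; rewrite -expr2 sqr_ge0.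
have h' := psumr_eq0P hge h.
apply/eqP/rowP => k; rewrite mxE.
by have /eqP := h' k isT; rewrite mulf_eq0 orbb => /eqP.
Qed.

Theorem lemma2 (R : rcfType) (pz : R) (N : nat) :
  0 <= pz <= 1 -> (1 <= N)%N ->
  eigenvalue (PDC_N pz N) (lambda_min pz N) /\
  (forall a : R, eigenvalue (PDC_N pz N) a -> lambda_min pz N <= a).
Proof.
move=> hp hN.
set c := cc R N.
have hc : 0 < c by rewrite /c /cc invr_gt0 sqrtr_gt0 exprn_gt0.
have hne : (ord0 != ord_max :> 'I_N.+1) by rewrite -val_eqE /= eq_sym -lt0n.
have g1 : ip (e0 R N) (e0 R N) = 1 by rewrite /e0 ip_hv !mxE eqxx.
have g2 : ip (eN R N) (eN R N) = 1 by rewrite /eN ip_hv !mxE eqxx.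
have g3 : ip (e0 R N) (eN R N) = 0 by rewrite /e0 ip_hv !mxE (negbTE hne).
have g4 : ip (u0 R N) (u0 R N) = 1 by rewrite /u0 ip_da eqxx.
have g5 : ip (uN R N) (uN R N) = 1 by rewrite /uN ip_da eqxx.
have g6 : ip (u0 R N) (uN R N) = 0 by rewrite /u0 /uN ip_da (negbTE hne).
have g7 : ip (e0 R N) (u0 R N) = if odd N then - c else c by rewrite /e0 ip_hv !mxE c00.
have g8 : ip (e0 R N) (uN R N) = c by rewrite /e0 ip_hv !mxE cN0.
have g9 : ip (eN R N) (u0 R N) = c by rewrite /eN ip_hv !mxE c0N.
have g10 : ip (eN R N) (uN R N) = c by rewrite /eN ip_hv !mxE cNN.
set mu := 1 - lambda_min pz N.
set D := (2 * pz - 1) ^+ 2 + (if odd N then 8 else 16) * (2 ^+ N)^-1 * (pz - pz ^+ 2).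
have hD : 0 <= D.
  case/andP: hp => h0 h1.
  apply: addr_ge0; first exact: sqr_ge0.
  apply: mulr_ge0; first by apply: mulr_ge0; [case: ifP|rewrite invr_ge0 exprn_ge0].
  nra.
set r := Num.sqrt D.
have hr0 : 0 <= r by exact: sqrtr_ge0.
have hr2 : r ^+ 2 = D by rewrite sqr_sqrtr.
have hmu_r : mu = 2^-1 + 2^-1 * r.
  by rewrite /mu /lambda_min -/D -/r; field.
have hc2 : c ^+ 2 = (2 ^+ N)^-1 by rewrite cc_sq.
have hmu : mu ^+ 2 - mu + (1 - (if odd N then 2 else 4) * c ^+ 2) * (pz * (1 - pz)) = 0.
  rewrite hmu_r hc2.
  have : r ^+ 2 = D := hr2.
  rewrite /D; set w := (2 ^+ N)^-1; case: (odd N) => h.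
  - have -> : (2^-1 + 2^-1 * r) ^+ 2 - (2^-1 + 2^-1 * r) + (1 - 2 * w) * (pz * (1 - pz))
      = (r ^+ 2 - ((2 * pz - 1) ^+ 2 + 8 * w * (pz - pz ^+ 2))) / 4 by field.
    by rewrite h subrr mul0r.
  - have -> : (2^-1 + 2^-1 * r) ^+ 2 - (2^-1 + 2^-1 * r) + (1 - 4 * w) * (pz * (1 - pz))
      = (r ^+ 2 - ((2 * pz - 1) ^+ 2 + 16 * w * (pz - pz ^+ 2))) / 4 by field.
    by rewrite h subrr mul0r.
have hDge : (2 * pz - 1) ^+ 2 <= D.
  rewrite /D lerDl; case/andP: hp => h0 h1.
  apply: mulr_ge0; first by apply: mulr_ge0; [case: ifP|rewrite invr_ge0 exprn_ge0].
  nra.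
have hr1 : 2 * pz - 1 <= r by rewrite -hr2 in hDge; nra.
have hr1' : 1 - 2 * pz <= r by rewrite -hr2 in hDge; nra.
have hm1 : pz <= mu by rewrite hmu_r; lra.
have hm2 : 1 - pz <= mu by rewrite hmu_r; lra.
split.
- apply/eigenvalueP.
  have [v [hv hQ]] := @core_eig _ _ _ _ _ _ _ _ _ _ g1 g2 g3 g4 g5 g6 g7 g8 g9 g10 hc hm1 hm2 hmu.
  exists v; last by apply: contra hv => /eqP ->; rewrite ip0l.
  rewrite PDC_act // hQ /mu.
  by rewrite scalerBl scale1r opprB addrC subrK.
- move=> a /eigenvalueP [v hv hv0].
  have hb := @core_bound _ _ _ _ _ _ _ _ _ _ g1 g2 g3 g4 g5 g6 g7 g8 g9 g10 hp hm1 hm2 hmu v.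
  have hV := @ip_gt0 _ _ _ hv0.
  have := congr1 (fun w => ip w v) hv; rewrite /= PDC_act // ipBl ipZl => he.
  have : lambda_min pz N = 1 - mu by rewrite /mu; ring.
  move=> ->.
  nra.
Qed.
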